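(* Fix an integer $d\ge 2$ and $\theta>0$, and regard $F$ (defined in the context) as an affine function of the real variables $\sigma_{CC,kl},\sigma_{CD,kl},\sigma_{DD,kl}$, $k,l\in\{0,\ldots,d-1\}$, with all other quantities held fixed. Then, for every $k,l\in\{0,\ldots,d-1\}$: (i) the coefficient of $\sigma_{CC,kl}$ in $F$ is strictly negative; (ii) the coefficient of $\sigma_{DD,kl}$ in $F$ is strictly positive; (iii) the coefficient of $\sigma_{CD,kl}$ in $F$ is strictly positive if $k+l>d-1$, strictly negative if $k+l<d-1$, and zero if $k+l=d-1$. Consequently, decreasing any $\sigma_{CC,kl}$ or increasing any $\sigma_{DD,kl}$ increases $F$; increasing $\sigma_{CD,kl}$ increases $F$ when $k+l>d-1$, decreases it when $k+l<d-1$, and leaves it unchanged when $k+l=d-1$.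
   Context: Model: in a large well-mixed population, individuals use strategy $C$ (cooperate) or $D$ (defect) and interact in random groups of size $d$. A $C$-player (resp. $D$-player) whose $d-1$ partners include $k$ cooperators receives the random payoff $a_k$ (resp. $b_k$), $k=0,\ldots,d-1$. Payoffs are redrawn independently at each time step, and for a selection intensity $\delta\ge 0$ they satisfy $E[a_k]=\mu_{C,k}\delta+o(\delta)$, $E[b_k]=\mu_{D,k}\delta+o(\delta)$, $E[a_ka_l]=\sigma_{CC,kl}\delta+o(\delta)$, $E[b_kb_l]=\sigma_{DD,kl}\delta+o(\delta)$, $E[a_kb_l]=\sigma_{CD,kl}\delta+o(\delta)$, with all moments of order at least $3$ being $o(\delta)$. The population evolves by a Moran birth–death process with fitness $1+{}$payoff and symmetric mutation, with scaled mutation rate $\theta>0$. For integers $0\le k\le n$ define $$\psi_n^k=\frac{\prod_{i=1}^{k}(\theta+i-1)\prod_{j=1}^{n-k}(\theta+j-1)}{\prod_{l=1}^{n}(2\theta+l-1)}$$ (empty products equal $1$), and define $$F=\sum_{k=0}^{d-1}\binom{d-1}{k}\psi_{d+1}^{k+1}(\mu_{C,k}-\mu_{D,k})+\sum_{k,l=0}^{d-1}\binom{d-1}{k}\binom{d-1}{l}\Big[-\psi_{2d+1}^{k+l+2}(\sigma_{CC,kl}-\sigma_{CD,kl})+\psi_{2d+1}^{k+l+1}(\sigma_{DD,kl}-\sigma_{CD,kl})\Big].$$ In the paper's large-population, weak-selection approximation, the stationary average abundance of $C$ is $\tfrac12+\tfrac{\delta(1-u)}{u}F$ to first order in $\delta$,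 where $u$ is the per-step mutation probability. Thus weak selection favors the abundance of $C$ iff $F>0$, and increasing (resp. decreasing) $F$ increases (resp. decreases) the average abundance of $C$. *)

(* Defs.v *)
From mathcomp Require Import all_boot all_order all_algebra.
Set Implicit Arguments. Unset Strict Implicit. Unset Printing Implicit Defensive.
Import Order.TTheory GRing.Theory Num.Theory.
Local Open Scope ring_scope.

Definition psi (R : realFieldType) (theta : R) (n k : nat) : R :=
  (\prod_(i < k) (theta + i%:R)) * (\prod_(j < n - k) (theta + j%:R))
  / (\prod_(l < n) (2 * theta + l%:R)).

Definition F (R : realFieldType) (d : nat) (theta : R)
  (muC muD : 'I_d -> R) (sCC sCD sDD : 'I_d -> 'I_d -> R) : R :=
  \sum_(k < d) ('C(d.-1, k))%:R * psi theta d.+1 k.+1 * (muC k - muD k)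
  + \sum_(k < d) \sum_(l < d) ('C(d.-1, k))%:R * ('C(d.-1, l))%:R *
      (- psi theta (2 * d).+1 (k + l).+2 * (sCC k l - sCD k l)
       + psi theta (2 * d).+1 (k + l).+1 * (sDD k l - sCD k l)).

Definition upd (R : realFieldType) (d : nat) (s : 'I_d -> 'I_d -> R)
  (k l : 'I_d) (t : R) : 'I_d -> 'I_d -> R :=
  fun i j => if (i == k) && (j == l) then s i j + t else s i j.

(* c is the coefficient of sigma_{CC,kl} (resp. CD, DD) in the affine function F:
   changing that single variable by t changes F by c * t, whatever the other inputs. *)
Definition is_coef_CC (R : realFieldType) (d : nat) (theta : R) (k l : 'I_d) (c : R) :=
  forall muC muD sCC sCD sDD (t : R),
    F theta muC muD (upd sCC k l t) sCD sDD = F theta muC muD sCC sCD sDD + c * t.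
Definition is_coef_CD (R : realFieldType) (d : nat) (theta : R) (k l : 'I_d) (c : R) :=
  forall muC muD sCC sCD sDD (t : R),
    F theta muC muD sCC (upd sCD k l t) sDD = F theta muC muD sCC sCD sDD + c * t.
Definition is_coef_DD (R : realFieldType) (d : nat) (theta : R) (k l : 'I_d) (c : R) :=
  forall muC muD sCC sCD sDD (t : R),
    F theta muC muD sCC sCD (upd sDD k l t) = F theta muC muD sCC sCD sDD + c * t.

(* Main.v *)
Require Import Defs.
From mathcomp Require Import all_boot all_order all_algebra.
From mathcomp Require Import zify ring lra.
Import Order.TTheory GRing.Theory Num.Theory.
Local Open Scope ring_scope.

Section Aux.
Variable R : realFieldType.

Lemma sum_ind (d : nat) (f : 'I_d -> 'I_d -> R) (k l : 'I_d) :
  \sum_i \sum_j (if (i == k) && (j == l) then f i j else 0) = f k l.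
Proof.
rewrite (bigD1 k) //= [X in _ + X]big1 => [|i /negPf ->]; last by rewrite big1.
rewrite addr0 (bigD1 l) //= !eqxx big1 ?addr0 // => j /negPf ->.
by rewrite andbF.
Qed.

Lemma upd_sum (d : nat) (g : 'I_d -> 'I_d -> R -> R) (c : 'I_d -> 'I_d -> R)
  (s : 'I_d -> 'I_d -> R) (k l : 'I_d) (t : R) :
  (forall i j x, g i j (x + t) = g i j x + c i j * t) ->
  \sum_i \sum_j g i j (upd s k l t i j) = \sum_i \sum_j g i j (s i j) + c k l * t.
Proof.
move=> H.
rewrite -(@sum_ind d (fun i j => c i j * t)) -big_split /=; apply eq_bigr => i _.
rewrite -big_split; apply eq_bigr => j _ /=; rewrite /upd.
by case: ifP => _; [apply: H | rewrite addr0].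
Qed.

Lemma prod_pos (theta : R) (n : nat) (a : R) : 0 < theta -> 0 < a ->
  0 < \prod_(i < n) (a * theta + i%:R).
Proof.
move=> ht ha; apply: prodr_gt0 => i _.
have := ler0n R i; have := mulr_gt0 ha ht; lra.
Qed.

Lemma psi_gt0 (theta : R) n k : 0 < theta -> 0 < psi theta n k.
Proof.
move=> ht; rewrite /psi.
have h1 : 0 < \prod_(i < k) (theta + i%:R).
  by have := prod_pos theta k 1 ht ltr01; under eq_bigr do rewrite mul1r.
have h2 : 0 < \prod_(i < n - k) (theta + i%:R).
  by have := prod_pos theta (n - k) 1 ht ltr01; under eq_bigr do rewrite mul1r.
have h3 : 0 < \prod_(l < n) (2 * theta + l%:R).
  by apply: prodr_gt0 => i _; have := ler0n R i; lra.
by rewrite divr_gt0 // mulr_gt0.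
Qed.

Lemma psi_diff (theta : R) n m : (m < n)%N ->
  psi theta n m.+1 - psi theta n m =
  (\prod_(i < m) (theta + i%:R)) * (\prod_(j < n - m.+1) (theta + j%:R))
  / (\prod_(l < n) (2 * theta + l%:R)) * (m%:R - (n - m.+1)%:R).
Proof.
move=> hm; rewrite /psi big_ord_recr /=.
have -> : (n - m = (n - m.+1).+1)%N by lia.
rewrite [X in _ - _ * X / _]big_ord_recr /=.
ring.
Qed.

End Aux.

Theorem mainTheorem2 (R : realFieldType) (d : nat) (theta : R) :
  (2 <= d)%N -> 0 < theta ->
  forall k l : 'I_d,
    (exists2 c : R, is_coef_CC theta k l c & c < 0) /\
    (exists2 c : R, is_coef_DD theta k l c & 0 < c) /\
    (exists c : R, [/\ is_coef_CD theta k l c,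
                      (d.-1 < k + l)%N -> 0 < c,
                      (k + l < d.-1)%N -> c < 0 &
                      (k + l = d.-1)%N -> c = 0]).
Proof.
move=> hd ht k l.
have hk := ltn_ord k; have hl := ltn_ord l.
have hB : 0 < ('C(d.-1, k))%:R * ('C(d.-1, l))%:R :> R.
  by rewrite mulr_gt0 // ltr0n bin_gt0; lia.
split; [|split].
- exists (- (('C(d.-1, k))%:R * ('C(d.-1, l))%:R * psi theta (2 * d).+1 (k + l).+2)).
    move=> muC muD sCC sCD sDD t; rewrite /F -addrA; congr (_ + _).
    apply: (@upd_sum _ _ (fun i j x => ('C(d.-1, i))%:R * ('C(d.-1, j))%:R *
      (- psi theta (2 * d).+1 (i + j).+2 * (x - sCD i j)
       + psi theta (2 * d).+1 (i + j).+1 * (sDD i j - sCD i j))) (fun i j => - (('C(d.-1, i))%:R * ('C(d.-1, j))%:R * psi theta (2 * d).+1 (i + j).+2))).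
    by move=> i j x; ring.
  by rewrite oppr_lt0 mulr_gt0 // psi_gt0.
- exists (('C(d.-1, k))%:R * ('C(d.-1, l))%:R * psi theta (2 * d).+1 (k + l).+1).
    move=> muC muD sCC sCD sDD t; rewrite /F -addrA; congr (_ + _).
    apply: (@upd_sum _ _ (fun i j x => ('C(d.-1, i))%:R * ('C(d.-1, j))%:R *
      (- psi theta (2 * d).+1 (i + j).+2 * (sCC i j - sCD i j)
       + psi theta (2 * d).+1 (i + j).+1 * (x - sCD i j))) (fun i j => ('C(d.-1, i))%:R * ('C(d.-1, j))%:R * psi theta (2 * d).+1 (i + j).+1)).
    by move=> i j x; ring.
  by rewrite mulr_gt0 // psi_gt0.
- exists (('C(d.-1, k))%:R * ('C(d.-1, l))%:R *
     (psi theta (2 * d).+1 (k + l).+2 - psi theta (2 * d).+1 (k + l).+1)).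
  split.
  + move=> muC muD sCC sCD sDD t; rewrite /F -addrA; congr (_ + _).
    apply: (@upd_sum _ _ (fun i j x => ('C(d.-1, i))%:R * ('C(d.-1, j))%:R *
      (- psi theta (2 * d).+1 (i + j).+2 * (sCC i j - x)
       + psi theta (2 * d).+1 (i + j).+1 * (sDD i j - x))) (fun i j => ('C(d.-1, i))%:R * ('C(d.-1, j))%:R *
     (psi theta (2 * d).+1 (i + j).+2 - psi theta (2 * d).+1 (i + j).+1))).
    by move=> i j x; ring.
  all: have hm : ((k + l).+1 < (2 * d).+1)%N by lia.
  all: rewrite psi_diff //.
  all: set P := _ / _.
  all: have hP : 0 < P.
  all: try (rewrite /P divr_gt0 ?mulr_gt0 //; [
      have := prod_pos _ theta (k + l).+1 1 ht ltr01;
      by under eq_bigr do rewrite mul1r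
    | have := prod_pos _ theta ((2 * d).+1 - (k + l).+2) 1 ht ltr01;
      by under eq_bigr do rewrite mul1r
    | by apply: prodr_gt0 => i _; have := ler0n R i; lra]).
  + move=> h; rewrite mulr_gt0 // mulr_gt0 // subr_gt0 ltr_nat; lia.
  + move=> h; rewrite pmulr_rlt0 // pmulr_rlt0 // subr_lt0 ltr_nat; lia.
  + move=> h; have -> : ((2 * d).+1 - (k + l).+2 = (k + l).+1)%N by lia.
    by rewrite subrr !mulr0.
Qed.
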